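(* Let $(H,+,\circ)$ be a commutative multiplicative hyperring with identity $1$, and let $P$ be an sdf-absorbing strong $\mathcal{C}$-hyperideal of $H$. Then the following are equivalent: (i) whenever $0\neq x,y\in H$ and $x^2-y^2\subseteq P$, both $x-y\in P$ and $x+y\in P$; (ii) $1+1\in P$; (iii) the quotient hyperring $H/P$ is of characteristic $2$.
   Context: A commutative multiplicative hyperring $(H,+,\circ)$ consists of an abelian group $(H,+)$ and an associative, commutative hyperoperation $\circ: H\times H\to P^*(H)$ with $x\circ(y+z)\subseteq x\circ y+x\circ z$ and $x\circ(-y)=-(x\circ y)=(-x)\circ y$. For subsets $A,B$, $A\circ B=\bigcup_{a\in A,b\in B}a\circ b$, $A\pm B=\{a\pm b\}$; $x^2=x\circ x$. Identity: $x\in x\circ 1$ for all $x$. A hyperideal is a nonempty $P$ with $x-y\in P$ and $r\circ x\subseteq P$ for $x,y\in P$, $r\in H$. The quotient $H/P=\{x+P\}$ has the usual coset addition and $(x+P)*(y+P)=\{z+P: z\in x\circ y\}$. A hyperring has characteristic $\alpha$ if $\alpha$ is the least positive integer with $\alpha x=0$ for all $x$. Let $\mathcal{C}=\{c_1\circ\cdots\circ c_n: c_i\in H,n\in\mathbb{N}\}$ and $\mathfrak{C}=\{\sum_{i=1}^n C_i: C_i\in\mathcal{C}\}$; $P$ is a strong $\mathcal{C}$-hyperideal if for every $D\in\mathfrak{C}$, $D\cap P\neq\varnothing$ implies $D\subseteq P$. A proper hyperideal $P$ is sdf-absorbing if whenever $0\neq x,y\in H$ and $x^2-y^2\subseteq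 P$, then $x-y\in P$ or $x+y\in P$. *)

(* Defs.v *)
From HB Require Import structures.
From mathcomp Require Import all_boot all_algebra.
Set Implicit Arguments. Unset Strict Implicit. Unset Printing Implicit Defensive.
Import GRing.Theory.
Local Open Scope ring_scope.

(* Subsets of H are predicates H -> Prop; a hyperoperation is given by its
   graph: [hmul x y z] means z \in x o y. *)
Definition hset (H : Type) := H -> Prop.

Record cmhyperring (H : zmodType) := CMHyperring {
  hmul : H -> H -> H -> Prop;
  hmul_nonempty : forall x y, exists z, hmul x y z;
  hmul_comm : forall x y z, hmul x y z <-> hmul y x z;
  hmul_assoc : forall x y z w,
      (exists u, hmul y z u /\ hmul x u w) <-> (exists u, hmul x y u /\ hmul u z w);
  hmul_distr : forall x y z w, hmul x (y + z) w ->
      exists a b, hmul x y a /\ hmul x z b /\ w = a + b;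
  hmul_oppr : forall x y w, hmul x (- y) w <-> hmul x y (- w);
  hmul_oppl : forall x y w, hmul (- x) y w <-> hmul x y (- w)
}.

Section Hyper.
Variables (H : zmodType) (R : cmhyperring H).

Definition is_identity (e : H) : Prop := forall x, hmul R x e x.

Definition set1h (x : H) : hset H := fun z => z = x.
Definition setmulh (A B : hset H) : hset H :=
  fun z => exists a b, A a /\ B b /\ hmul R a b z.
Definition setaddh (A B : hset H) : hset H :=
  fun z => exists a b, A a /\ B b /\ z = a + b.
Definition subseth (A B : hset H) : Prop := forall z, A z -> B z.
Definition eqseth (A B : hset H) : Prop := forall z, A z <-> B z.

(* c_1 o c_2 o ... o c_n, given as c_1 and the list [c_2; ...; c_n] *)
Definition hprod (c : H) (cs : seq H) : hset H :=
  foldl (fun A x => setmulh A (set1h x)) (set1h c) cs.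

(* C_1 + ... + C_n with C_i in the class C, given as C_1 and [C_2; ...; C_n] *)
Definition hsum (C : H * seq H) (Cs : seq (H * seq H)) : hset H :=
  foldl (fun A p => setaddh A (hprod p.1 p.2)) (hprod C.1 C.2) Cs.

Definition hyperideal (P : hset H) : Prop :=
  (exists x, P x) /\
  (forall x y, P x -> P y -> P (x - y)) /\
  (forall r x, P x -> subseth (setmulh (set1h r) (set1h x)) P).

Definition proper (P : hset H) : Prop := exists x, ~ P x.

(* strong C-hyperideal: every D in frak C meeting P is contained in P *)
Definition strong_C_hyperideal (P : hset H) : Prop :=
  hyperideal P /\
  forall C Cs, (exists z, hsum C Cs z /\ P z) -> subseth (hsum C Cs) P.

Definition sq_diff (x y : H) : hset H :=
  fun z => exists a b, hmul R x x a /\ hmul R y y b /\ z = a - b.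

Definition sdf_absorbing (P : hset H) : Prop :=
  hyperideal P /\ proper P /\
  forall x y, x != 0 -> y != 0 -> subseth (sq_diff x y) P ->
    P (x - y) \/ P (x + y).

(* Quotient H/P: elements are cosets x + P, coset addition, zero = 0 + P = P *)
Definition coset (P : hset H) (x : H) : hset H := fun z => P (z - x).

Definition quot_nmul (P : hset H) (n : nat) (X : hset H) : hset H :=
  iter n (fun Y => setaddh X Y) (coset P 0).

Definition quot_has_char (P : hset H) (n : nat) : Prop :=
  (0 < n)%N /\
  (forall x, eqseth (quot_nmul P n (coset P x)) (coset P 0)) /\
  (forall m, (0 < m < n)%N ->
     ~ (forall x, eqseth (quot_nmul P m (coset P x)) (coset P 0))).

End Hyper.

(* Main.v *)
Require Import Defs.
From mathcomp Require Import all_boot all_algebra.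
Local Open Scope ring_scope.
Import GRing.Theory.

Set Implicit Arguments.
Section Aux.
Variables (H : zmodType) (R : cmhyperring H) (P : H -> Prop).

Lemma hi0 : hyperideal R P -> P 0.
Proof. move=> [[x Px] [hs _]]. by have := hs _ _ Px Px; rewrite subrr. Qed.

Lemma hiN x : hyperideal R P -> P x -> P (- x).
Proof. move=> hP Px. have := hP.2.1 _ _ (hi0 hP) Px. by rewrite sub0r. Qed.

Lemma hiD x y : hyperideal R P -> P x -> P y -> P (x + y).
Proof. move=> hP Px Py. have := hP.2.1 _ _ Px (hiN hP Py). by rewrite opprK. Qed.

Lemma two_y e y : is_identity R e -> strong_C_hyperideal R P -> P (e + e) -> P (y + y).
Proof.
move=> he [hP hs] Pee.
have [w hw] := hmul_nonempty R y (e + e).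
have Pw : P w by apply: (hP.2.2 y (e + e) Pee); exists y, (e + e).
have [a [b [ha [hb Ew]]]] := hmul_distr hw. rewrite Ew in Pw.
have := hs (y, [:: e]) [:: (y, [:: e])].
rewrite /hsum /hprod /=.
move=> H1. apply: H1.
  exists (a + b); split => //. exists a, b; split; [|split] => //.
    by exists y, e.
  by exists y, e.
exists y, y; split; [|split] => //; exists y, e; done.
Qed.
End Aux.
Unset Implicit Arguments.

Theorem mainTheorem3 (H : zmodType) (R : cmhyperring H) (e : H)
  (he : is_identity R e) (P : H -> Prop)
  (hsdf : sdf_absorbing R P) (hstrong : strong_C_hyperideal R P) :
  ((forall x y : H, x != 0 -> y != 0 -> subseth (sq_diff R x y) P ->
      P (x - y) /\ P (x + y)) <-> P (e + e))
  /\ (P (e + e) <-> quot_has_char P 2).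
Proof.
have hP := hstrong.1.
have [x0 nPx0] := hsdf.2.1.
have e0 : e != 0.
  apply/eqP => E; apply: nPx0.
  apply: (hP.2.2 x0 0 (hi0 hP)). exists x0, 0; split => //; split => //.
  by have := he x0; rewrite E.
split; last first.
  split.
    move=> Pee; split => //; split.
      move=> x z; split.
        move=> [a [b [Ha [[c [d [Hc [Hd ->]]]] ->]]]].
        rewrite /coset subr0 in Hd *.
        have -> : a + (c + d) = (a - x) + ((c - x) + (d + (x + x))).
          by rewrite [d + _]addrC -!addrA addKr [- x + (c + _)]addrCA addKr.
        rewrite subr0.         apply: (hiD _ _ hP) => //; apply: (hiD _ _ hP) => //; apply: (hiD _ _ hP) => //.
        exact: (two_y x he hstrong Pee).
      move=> Hz. rewrite /coset subr0 in Hz.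
      exists x, (z - x); split; first by rewrite /coset subrr; exact: (hi0 hP).
      split; last by rewrite [x + _]addrC subrK.
      exists x, (z - x - x); split; first by rewrite /coset subrr; exact: (hi0 hP).
      split; last by rewrite [x + _]addrC subrK.
      rewrite /quot_nmul /= /coset subr0 -addrA -opprD.
      have := hP.2.1 _ _ Hz (two_y x he hstrong Pee). done.
    move=> m /andP [m0 m2].
    have -> : m = 1%N by case: m m0 m2 => [|[|]].
    move=> Hall. apply: nPx0.
    have := (Hall x0 x0).1. rewrite /coset subr0. apply.
    exists x0, 0; split; first by rewrite subrr; exact: (hi0 hP).
    split; last by rewrite addr0.
    rewrite /quot_nmul /= /coset subr0; exact: (hi0 hP).
  move=> [_ [H2 _]].
  have := (H2 e (e + e)).1.
  rewrite /coset subr0. apply; rewrite /quot_nmul /=.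
  exists e, e; split; first by rewrite subrr; exact: (hi0 hP).
  split => //.
  exists e, 0; split; first by rewrite subrr; exact: (hi0 hP).
  split; last by rewrite addr0.
  rewrite /quot_nmul /= /coset subr0; exact: (hi0 hP).
split.
  move=> Hi. have := Hi e e e0 e0. case.
    move=> z [a [b [Ha [Hb ->]]]].
    have := hstrong.2 (e, [:: e]) [:: (- e, [:: e])].
    rewrite /hsum /hprod /=. apply.
      exists 0; split; last exact: (hi0 hP).
      exists e, (- e); split; first by exists e, e.
      split; last by rewrite subrr.
            exists (- e), e; split => //; split => //.
    exists a, (- b); split; first by exists e, e.
    split => //.
    exists (- e), e; split => //; split => //.
    by apply: (proj2 (hmul_oppl R e e (- b))); rewrite opprK.
  by [].
move=> Pee x y x0' y0' Hs.
have Pyy := two_y y he hstrong Pee.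
case: (hsdf.2.2 x y x0' y0' Hs) => Hxy; split => //.
  have -> : x + y = (x - y) + (y + y) by rewrite addrA subrK.
  exact: (hiD _ _ hP).
have -> : x - y = (x + y) - (y + y) by rewrite opprD addrA addrK.
exact: hP.2.1.
Qed.
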